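(* There exist $\bar\tau\in(\tfrac12,1)$ and $\bar\rho,\bar R,\bar\phi,\bar\epsilon>0$ such that the following holds. Let $p,q\in\mathbb{H}^n\setminus\{0\}$, $t,\tilde t\ge1$, $R>1$, $T\ge t\tilde t$, $\epsilon\in(0,1)$, and $r\ge\tilde r\ge TR$ with $\tilde r\le\epsilon r$; suppose $q\in\partial_tB_r(p)$ and $0\in\partial_tB_r(p)\cap\partial_{\tilde t}B_{\tilde r}(q)$. Let $I(p)=\{i:\rho_i(p)<10T/r\}$. If $R>\bar R$, $\epsilon<\bar\epsilon$, $|\tau_p|\ge\bar\tau$ and $\max_{1\le i\le n}\phi_i(p,q)<\bar\phi$, then either there exists $i\notin I(p)$ with $\rho_i(q)<10T/\tilde r$, or $d(\hat p,\hat q)>\bar\rho$.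
   Context: $\mathbb{H}^n=\mathbb{C}^n\times\mathbb{R}$ with product $(z,\tau)(w,\sigma)=(z+w,\tau+\sigma+\tfrac12\operatorname{Im}\langle z,w\rangle)$, $\langle z,w\rangle=\sum_j\overline{z_j}w_j$, identity $0$; dilations $\delta_\lambda(z,\tau)=(\lambda z,\lambda^2\tau)$; $d(p,q)=\inf\{r>0:\delta_{1/r}(pq^{-1})\in B_{eucl}\}$ ($B_{eucl}$ the closed Euclidean unit ball in $\mathbb{R}^{2n+1}$). $B_r(p)=\{y:d(y,p)\le r\}$, $\partial B_r(p)=\{y:d(y,p)=r\}$, $\partial_tB_r(p)=\{y:d(y,\partial B_r(p))\le t\}$. For $p\ne0$ let $\hat p=\delta_{1/d(p,0)}p=(z_p,\tau_p)$, so $\|z_p\|^2+\tau_p^2=1$; write $(z_p)_j=\rho_j(p)e^{i\phi_j(p)}$ with $\rho_j(p)\ge0$, $\phi_j(p)\in(-\pi,\pi]$. For $p,q\ne0$, $\phi_j(p,q)\in[0,\pi]$ is the magnitude of the angle between $e^{i\phi_j(p)}$ and $e^{i\phi_j(q)}$. *)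

(* Defs.v *)
From Stdlib Require Import Reals Lra Lia ClassicalEpsilon.
Open Scope R_scope.

(* A point of H^n = C^n x R.  Coordinate j (0 <= j < n) of z is
   hx p j + i * hy p j; values at indices >= n are irrelevant
   (all notions below only read indices < n). *)
Record Hpt := mkH { hx : nat -> R; hy : nat -> R; ht : R }.

Fixpoint fsum (f : nat -> R) (k : nat) : R :=
  match k with O => 0 | S k' => fsum f k' + f k' end.

Definition H0 : Hpt := mkH (fun _ => 0) (fun _ => 0) 0.

Definition Hnonzero (n : nat) (p : Hpt) : Prop :=
  ht p <> 0 \/ exists j, (j < n)%nat /\ (hx p j <> 0 \/ hy p j <> 0).

(* Im <z,w> with <z,w> = sum_j conj(z_j) w_j *)
Definition imherm (n : nat) (p q : Hpt) : R :=
  fsum (fun j => hx p j * hy q j - hy p j * hx q j) n.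

(* group law (z,t)(w,s) = (z+w, t+s+1/2 Im<z,w>) *)
Definition Hmul (n : nat) (p q : Hpt) : Hpt :=
  mkH (fun j => hx p j + hx q j) (fun j => hy p j + hy q j)
      (ht p + ht q + / 2 * imherm n p q).

Definition Hinv (p : Hpt) : Hpt :=
  mkH (fun j => - hx p j) (fun j => - hy p j) (- ht p).

Definition Hdil (l : R) (p : Hpt) : Hpt :=
  mkH (fun j => l * hx p j) (fun j => l * hy p j) (l ^ 2 * ht p).

Definition znorm2 (n : nat) (p : Hpt) : R :=
  fsum (fun j => hx p j ^ 2 + hy p j ^ 2) n.

Definition in_eucl_ball (n : nat) (p : Hpt) : Prop :=
  znorm2 n p + ht p ^ 2 <= 1.

Definition is_glb (E : R -> Prop) (m : R) : Prop :=
  (forall x, E x -> m <= x) /\ (forall b, (forall x, E x -> b <= x) -> b <= m).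

Definition Rinf (E : R -> Prop) : R :=
  epsilon (inhabits 0) (fun m => is_glb E m).

Definition Hdist (n : nat) (p q : Hpt) : R :=
  Rinf (fun r => r > 0 /\ in_eucl_ball n (Hdil (/ r) (Hmul n p (Hinv q)))).

Definition Hdist_set (n : nat) (y : Hpt) (S : Hpt -> Prop) : R :=
  Rinf (fun a => exists s, S s /\ a = Hdist n y s).

Definition Hball (n : nat) (r : R) (p : Hpt) : Hpt -> Prop :=
  fun y => Hdist n y p <= r.
Definition Hsphere (n : nat) (r : R) (p : Hpt) : Hpt -> Prop :=
  fun y => Hdist n y p = r.
Definition Hshell (n : nat) (t r : R) (p : Hpt) : Hpt -> Prop :=
  fun y => Hdist_set n y (Hsphere n r p) <= t.

Definition Hhat (n : nat) (p : Hpt) : Hpt := Hdil (/ Hdist n p H0) p.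

Definition rho (n : nat) (j : nat) (p : Hpt) : R :=
  sqrt (hx (Hhat n p) j ^ 2 + hy (Hhat n p) j ^ 2).

(* phi_j(p) in (-pi, pi] with (z_{p-hat})_j = rho_j(p) e^{i phi_j(p)}
   (arbitrary in (-pi,pi] if rho_j(p) = 0) *)
Definition phi (n : nat) (j : nat) (p : Hpt) : R :=
  epsilon (inhabits 0) (fun th => - PI < th <= PI /\
     hx (Hhat n p) j = rho n j p * cos th /\ hy (Hhat n p) j = rho n j p * sin th).

(* phi_j(p,q) in [0,pi]: magnitude of the angle between e^{i phi_j(p)}
   and e^{i phi_j(q)} *)
Definition phi2 (n : nat) (j : nat) (p q : Hpt) : R :=
  acos (cos (phi n j p - phi n j q)).

(* Main.v *)
Require Import Defs.
From Stdlib Require Import Reals Lra Psatz ClassicalEpsilon Classical.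
Open Scope R_scope.


Lemma fsum_ext f g k : (forall j, (j < k)%nat -> f j = g j) -> fsum f k = fsum g k.
Proof. induction k; simpl; intros H; [reflexivity|]. rewrite IHk by (intros; apply H; lia). rewrite H by lia; reflexivity. Qed.

Lemma fsum_plus f g k : fsum (fun j => f j + g j) k = fsum f k + fsum g k.
Proof. induction k; simpl; [lra|]. rewrite IHk; lra. Qed.

Lemma fsum_minus f g k : fsum (fun j => f j - g j) k = fsum f k - fsum g k.
Proof. induction k; simpl; [lra|]. rewrite IHk; lra. Qed.

Lemma fsum_scal c f k : fsum (fun j => c * f j) k = c * fsum f k.
Proof. induction k; simpl; [lra|]. rewrite IHk; lra. Qed.

Lemma fsum_zero k : fsum (fun _ => 0) k = 0.
Proof. induction k; simpl; [lra|]. rewrite IHk; lra. Qed.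

Lemma fsum_nonneg f k : (forall j, (j < k)%nat -> 0 <= f j) -> 0 <= fsum f k.
Proof. induction k; simpl; intros H; [lra|]. assert (0 <= fsum f k) by (apply IHk; intros; apply H; lia). specialize (H k ltac:(lia)). lra. Qed.

Lemma fsum_le f g k : (forall j, (j < k)%nat -> f j <= g j) -> fsum f k <= fsum g k.
Proof. induction k; simpl; intros H; [lra|]. assert (fsum f k <= fsum g k) by (apply IHk; intros; apply H; lia). specialize (H k ltac:(lia)). lra. Qed.

Lemma fsum_lb f c k : (forall j, (j < k)%nat -> c <= f j) -> INR k * c <= fsum f k.
Proof. induction k; intros H; cbn [fsum]; [simpl; lra|]. assert (INR k * c <= fsum f k) by (apply IHk; intros; apply H; lia). specialize (H k ltac:(lia)). rewrite S_INR. lra. Qed.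

Lemma fsum_term f k j : (forall i, (i < k)%nat -> 0 <= f i) -> (j < k)%nat -> f j <= fsum f k.
Proof. induction k; simpl; intros H Hj; [lia|].
  assert (0 <= fsum f k) by (apply fsum_nonneg; intros; apply H; lia).
  destruct (Nat.eq_dec j k). subst. specialize (H k ltac:(lia)); lra.
  assert (f j <= fsum f k) by (apply IHk; [intros; apply H; lia| lia]). specialize (H k ltac:(lia)); lra. Qed.

Lemma fsum_zero_inv f k : (forall i, (i < k)%nat -> 0 <= f i) -> fsum f k = 0 -> forall j, (j < k)%nat -> f j = 0.
Proof. intros H E j Hj. assert (f j <= fsum f k) by (apply fsum_term; auto). specialize (H j Hj). lra. Qed.

Lemma fsum_CS (a b c d : nat -> R) k :
  (fsum (fun j => a j * c j + b j * d j) k)^2 <=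
  fsum (fun j => a j ^2 + b j ^2) k * fsum (fun j => c j ^2 + d j ^2) k.
Proof.
  set (S := fsum (fun j => a j * c j + b j * d j) k).
  set (A := fsum (fun j => a j ^2 + b j ^2) k).
  set (C := fsum (fun j => c j ^2 + d j ^2) k).
  assert (Hq : forall l, 0 <= A - 2 * l * S + l^2 * C).
  { intro l. assert (E : A - 2 * l * S + l^2 * C = fsum (fun j => (a j - l * c j)^2 + (b j - l * d j)^2) k).
    { unfold A, S, C. rewrite <- (fsum_scal (l^2)), <- (fsum_scal (2*l)), <- fsum_minus, <- fsum_plus.
      apply fsum_ext; intros; ring. }
    rewrite E. apply fsum_nonneg. intros j _. pose proof (pow2_ge_0 (a j - l * c j)). pose proof (pow2_ge_0 (b j - l * d j)). lra. }
  assert (HA : 0 <= A) by (apply fsum_nonneg; intros j _; pose proof (pow2_ge_0 (a j)); pose proof (pow2_ge_0 (b j)); pose proof (pow2_ge_0 (c j)); pose proof (pow2_ge_0 (d j)); lra).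
  assert (HC : 0 <= C) by (apply fsum_nonneg; intros j _; pose proof (pow2_ge_0 (a j)); pose proof (pow2_ge_0 (b j)); pose proof (pow2_ge_0 (c j)); pose proof (pow2_ge_0 (d j)); lra).
  destruct (Req_dec C 0) as [C0|C0].
  - assert (S = 0).
    { destruct (Req_dec S 0); auto. exfalso. specialize (Hq ((A + 1) / (2 * S))).
      rewrite C0 in Hq. replace (A - 2 * ((A + 1) / (2 * S)) * S + ((A + 1) / (2 * S)) ^ 2 * 0) with (-1) in Hq by (field; auto). lra. }
    rewrite H, C0; lra.
  - specialize (Hq (S / C)). assert (0 < C) by lra.
    assert (0 <= A * C - S^2).
    { replace (A * C - S^2) with (C * (A - 2 * (S / C) * S + (S / C)^2 * C)) by (field; lra). nra. }
    lra.
Qed.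


Definition NN (Z t : R) := sqrt (Z / 2 + sqrt (Z^2 / 4 + t^2)).

Lemma sq_sqrt_aux Z t : 0 <= Z -> Z / 2 <= sqrt (Z^2 / 4 + t^2) /\ Rabs t <= sqrt (Z^2/4 + t^2).
Proof. intros HZ. split.
  - rewrite <- (sqrt_square (Z/2)) by lra. apply sqrt_le_1_alt. nra.
  - rewrite <- sqrt_Rsqr_abs. apply sqrt_le_1_alt. unfold Rsqr. nra.
Qed.

Lemma NN_facts Z t : 0 <= Z ->
  let N := NN Z t in 0 <= N /\ N^4 = Z * N^2 + t^2 /\ Z <= N^2 /\ t^2 <= N^4 /\ Rabs t <= N^2.
Proof. intros HZ N. destruct (sq_sqrt_aux Z t HZ) as [H1 H2].
  set (s := sqrt (Z^2/4 + t^2)) in *.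
  assert (Hs : s * s = Z^2/4 + t^2) by (apply sqrt_sqrt; nra).
  assert (HN2 : N^2 = Z/2 + s) by (unfold N, NN; fold s; simpl; rewrite Rmult_1_r; apply sqrt_sqrt; lra).
  assert (0 <= N) by apply sqrt_pos.
  assert (Habs: t^2 = Rabs t ^2) by (rewrite pow2_abs; reflexivity).
  pose proof (Rabs_pos t).
  repeat split; auto.
  - replace (N^4) with ((N^2)^2) by ring. rewrite HN2. nra.
  - rewrite HN2; lra.
  - replace (N^4) with ((N^2)^2) by ring. rewrite HN2. rewrite Habs. nra.
  - rewrite HN2; lra.
Qed.

Lemma NN_le Z t m : 0 <= Z -> 0 <= m -> Z <= 2 * m^2 -> Z * m^2 + t^2 <= m^4 -> NN Z t <= m.
Proof. intros HZ Hm H1 H2. unfold NN. rewrite <- (sqrt_square m) by lra. apply sqrt_le_1_alt.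
  assert (sqrt (Z^2/4 + t^2) <= m * m - Z/2); [|lra].
  rewrite <- (sqrt_square (m*m - Z/2)) by nra. apply sqrt_le_1_alt. nra.
Qed.

Lemma NN_ge Z t m : 0 <= Z -> NN Z t <= m -> Z * m^2 + t^2 <= m^4.
Proof. intros HZ H. destruct (NN_facts Z t HZ) as [H0 [H1 [H2 [H3 H4]]]].
  set (N := NN Z t) in *.
  assert (N^2 <= m^2) by nra.
  assert (m^4 - (Z * m^2 + t^2) = (m^2 - N^2) * (m^2 + N^2 - Z)) by (replace (m^4) with ((m^2)^2) by ring; nra).
  nra.
Qed.

Lemma NN_zero Z t : 0 <= Z -> NN Z t = 0 -> Z = 0 /\ t = 0.
Proof. intros HZ H. destruct (NN_facts Z t HZ) as [H0 [H1 [H2 [H3 H4]]]]. fold (NN Z t) in *. rewrite H in *. split; nra. Qed.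

Lemma NN_ext Z t Z' t' : Z = Z' -> t^2 = t'^2 -> NN Z t = NN Z' t'.
Proof. intros -> E. unfold NN. rewrite E. reflexivity. Qed.


Lemma glb_unique E m m' : is_glb E m -> is_glb E m' -> m = m'.
Proof. intros [A B] [C D]. apply Rle_antisym; [apply D|apply B]; auto. Qed.

Lemma Rinf_eq E m : is_glb E m -> Rinf E = m.
Proof. intros H. unfold Rinf. apply glb_unique with E; auto. apply epsilon_spec. exists m; auto. Qed.

Lemma glb_exists E : (exists x, E x) -> (forall x, E x -> 0 <= x) -> exists m, is_glb E m.
Proof. intros [x0 Hx0] Hlb.
  destruct (completeness (fun y => E (- y))) as [m [Hm1 Hm2]].
  - exists 0. intros y Hy. specialize (Hlb _ Hy). lra.
  - exists (- x0). rewrite Ropp_involutive; auto.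
  - exists (- m). split.
    + intros x Hx. assert (- x <= m) by (apply Hm1; rewrite Ropp_involutive; auto). lra.
    + intros b Hb. assert (m <= - b); [|lra]. apply Hm2. intros y Hy. specialize (Hb _ Hy). lra.
Qed.

Lemma znorm2_nonneg n x : 0 <= znorm2 n x.
Proof. unfold znorm2. apply fsum_nonneg. intros j _. pose proof (pow2_ge_0 (hx x j)). pose proof (pow2_ge_0 (hy x j)). lra. Qed.

Definition Nrm n x := NN (znorm2 n x) (ht x).

Lemma znorm2_dil n l x : znorm2 n (Hdil l x) = l^2 * znorm2 n x.
Proof. unfold znorm2, Hdil; simpl. rewrite <- fsum_scal. apply fsum_ext. intros; ring. Qed.

Lemma Hdist_eq n p q : Hdist n p q = Nrm n (Hmul n p (Hinv q)).
Proof.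
  unfold Hdist. apply Rinf_eq. set (x := Hmul n p (Hinv q)).
  pose proof (znorm2_nonneg n x) as HZ.
  assert (Hiff : forall r, r > 0 -> (in_eucl_ball n (Hdil (/ r) x) <-> Nrm n x <= r)).
  { intros r Hr. unfold in_eucl_ball. rewrite znorm2_dil. change (ht (Hdil (/r) x)) with ((/r)^2 * ht x). split; intro H.
    - assert (E4 : r^4 * ((/r)^2 * znorm2 n x + ((/r)^2 * ht x)^2) = znorm2 n x * r^2 + ht x^2) by (field; lra).
      assert (H4 : r^4 * ((/r)^2 * znorm2 n x + ((/r)^2 * ht x)^2) <= r^4 * 1) by (apply Rmult_le_compat_l; [apply pow_le; lra| lra]).
      rewrite E4 in H4.
      assert (0 <= ht x ^2) by apply pow2_ge_0.
      assert (0 < r^2) by (apply pow_lt; lra).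
      apply NN_le; auto; [lra| |lra].
      assert (znorm2 n x * r^2 <= r^2 * r^2) by (replace (r^2*r^2) with (r^4) by ring; lra).
      assert (znorm2 n x <= r^2) by (apply Rmult_le_reg_r with (r^2); lra). lra.
    - pose proof (NN_ge _ _ _ HZ H).
      assert (0 < r^4) by (apply pow_lt; lra).
      replace ((/r)^2 * znorm2 n x + ((/r)^2 * ht x)^2) with ((znorm2 n x * r^2 + ht x^2) / r^4) by (field; lra).
      apply Rmult_le_reg_r with (r^4); auto. unfold Rdiv. rewrite Rmult_assoc, Rinv_l by lra. lra. }
  assert (HN0 : 0 <= Nrm n x) by (apply NN_facts; auto).
  split.
  - intros r [Hr Hb]. apply Hiff; auto.
  - intros b Hb. destruct (Rle_dec b (Nrm n x)) as [|Hlt]; auto. exfalso.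
    set (r := (Nrm n x + b) / 2). assert (Hr : r > 0) by (unfold r; lra).
    assert (b <= r) by (apply Hb; split; auto; apply Hiff; auto; unfold r; lra).
    unfold r in H; lra.
Qed.


Definition dot n x y := fsum (fun j => hx x j * hx y j + hy x j * hy y j) n.
Definition nm n x := sqrt (znorm2 n x).
Definition Vsub x y := mkH (fun j => hx x j - hx y j) (fun j => hy x j - hy y j) 0.
Definition Vadd x y := mkH (fun j => hx x j + hx y j) (fun j => hy x j + hy y j) 0.

Lemma sq_le_abs a b : 0 <= b -> a^2 <= b^2 -> Rabs a <= b.
Proof. intros Hb H. rewrite <- (sqrt_Rsqr_abs a). rewrite <- (sqrt_square b) by lra. apply sqrt_le_1_alt. unfold Rsqr. nra. Qed.

Lemma nm_nonneg n x : 0 <= nm n x.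
Proof. apply sqrt_pos. Qed.

Lemma nm_sq n x : nm n x ^2 = znorm2 n x.
Proof. unfold nm. simpl. rewrite Rmult_1_r. apply sqrt_sqrt, znorm2_nonneg. Qed.

Lemma dot_abs n x y : Rabs (dot n x y) <= nm n x * nm n y.
Proof. apply sq_le_abs. pose proof (nm_nonneg n x); pose proof (nm_nonneg n y); nra.
  rewrite Rpow_mult_distr, !nm_sq. apply fsum_CS. Qed.

Lemma im_abs n x y : Rabs (imherm n x y) <= nm n x * nm n y.
Proof. apply sq_le_abs. pose proof (nm_nonneg n x); pose proof (nm_nonneg n y); nra.
  rewrite Rpow_mult_distr, !nm_sq. unfold imherm, znorm2.
  replace (fsum (fun j => hx x j * hy y j - hy x j * hx y j) n) with
    (fsum (fun j => hx x j * hy y j + hy x j * (- hx y j)) n) by (apply fsum_ext; intros; ring).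
  replace (fsum (fun j => hx y j ^2 + hy y j ^2) n) with (fsum (fun j => hy y j ^2 + (- hx y j) ^2) n) by (apply fsum_ext; intros; ring).
  apply fsum_CS. Qed.

Lemma znorm2_sub n x y : znorm2 n (Vsub x y) = znorm2 n x - 2 * dot n x y + znorm2 n y.
Proof. unfold znorm2, dot, Vsub; simpl. rewrite <- fsum_scal, <- fsum_minus, <- fsum_plus. apply fsum_ext; intros; ring. Qed.

Lemma znorm2_add n x y : znorm2 n (Vadd x y) = znorm2 n x + 2 * dot n x y + znorm2 n y.
Proof. unfold znorm2, dot, Vadd; simpl. rewrite <- fsum_scal, <- fsum_plus, <- fsum_plus. apply fsum_ext; intros; ring. Qed.

Lemma nm_le_of_sq n x c : 0 <= c -> znorm2 n x <= c^2 -> nm n x <= c.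
Proof. intros Hc H. unfold nm. rewrite <- (sqrt_square c) by lra. apply sqrt_le_1_alt. lra. Qed.

Lemma nm_sub_le n x y : nm n (Vsub x y) <= nm n x + nm n y.
Proof. apply nm_le_of_sq. pose proof (nm_nonneg n x); pose proof (nm_nonneg n y); lra.
  rewrite znorm2_sub. pose proof (dot_abs n x y). rewrite <- (nm_sq n x), <- (nm_sq n y).
  pose proof (Rle_abs (- dot n x y)). rewrite Rabs_Ropp in *. nra. Qed.

Lemma nm_add_le n x y : nm n (Vadd x y) <= nm n x + nm n y.
Proof. apply nm_le_of_sq. pose proof (nm_nonneg n x); pose proof (nm_nonneg n y); lra.
  rewrite znorm2_add. pose proof (dot_abs n x y). rewrite <- (nm_sq n x), <- (nm_sq n y).
  pose proof (Rle_abs (dot n x y)). nra. Qed.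

Lemma nm_ext n x y : (forall j, (j < n)%nat -> hx x j = hx y j /\ hy x j = hy y j) -> nm n x = nm n y.
Proof. intros H. unfold nm, znorm2. f_equal. apply fsum_ext. intros j Hj. destruct (H j Hj) as [-> ->]. reflexivity. Qed.

Lemma comp_le n x j : (j < n)%nat -> sqrt (hx x j ^2 + hy x j ^2) <= nm n x.
Proof. intros Hj. unfold nm. apply sqrt_le_1_alt. unfold znorm2.
  apply (fsum_term (fun j => hx x j ^2 + hy x j ^2)); auto. intros i _. pose proof (pow2_ge_0 (hx x i)). pose proof (pow2_ge_0 (hy x i)). lra. Qed.

Lemma core (Zs T N h : R) : 0 <= Zs -> Zs <= N -> 0 <= h -> 0 <= T -> T <= N^2 -> T^2 = N^4 - Zs^2*N^2 ->
  (h+Zs)^2 * (N + 3*h)^2 + (T + (h^2 + h*Zs/2))^2 <= (N+3*h)^4.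
Proof. intros. set (k := h^2 + h*Zs/2). set (m := N + 3*h).
  assert (0 <= N) by lra.
  assert (0 <= k) by (unfold k; nra).
  assert (Hk : (T + k)^2 <= N^4 - Zs^2*N^2 + 2*N^2*k + k^2).
  { replace ((T+k)^2) with (T^2 + 2*T*k + k^2) by ring. rewrite H4. nra. }
  assert (Hk2: k <= h^2 + h*N/2) by (unfold k; nra).
  assert (G1: (h+Zs)^2 <= (h+N)^2) by nra.
  assert (G2: (h+Zs)^2 * m^2 - Zs^2 * N^2 <= (h+N)^2*m^2 - N^2*N^2 ).
  { assert (m^2 - N^2 >= 0) by (unfold m; nra).
    replace ((h+Zs)^2*m^2 - Zs^2*N^2) with (Zs^2*(m^2-N^2) + (2*h*Zs+h^2)*m^2) by ring.
    replace ((h+N)^2*m^2 - N^2*N^2) with (N^2*(m^2-N^2) + (2*h*N+h^2)*m^2) by ring.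
    assert (Zs^2 <= N^2) by nra. assert (2*h*Zs <= 2*h*N) by nra. assert (0 <= m^2) by nra. nra. }
  assert (G3: (h+N)^2*m^2 - N^2*N^2 + N^4 + 2*N^2*(h^2 + h*N/2) + (h^2+h*N/2)^2 <= m^4).
  { unfold m.
    assert (E: (N + 3*h)^4 - ((h+N)^2*(N+3*h)^2 - N^2*N^2 + N^4 + 2*N^2*(h^2 + h*N/2) + (h^2+h*N/2)^2)
       = 3*h*N^3 + (32 - 2 - 1/4)*h^2*N^2 + 83*h^3*N + 71*h^4) by field.
    assert (0 <= h*N^3) by (apply Rmult_le_pos; [lra|apply pow_le; lra]).
    assert (0 <= h^2*N^2) by (apply Rmult_le_pos; apply pow_le; lra).
    assert (0 <= h^3*N) by (apply Rmult_le_pos; [apply pow_le|]; lra).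
    assert (0 <= h^4) by (apply pow_le; lra).
    lra. }
  assert (2*N^2*k + k^2 <= 2*N^2*(h^2 + h*N/2) + (h^2+h*N/2)^2) by nra.
  nra.
Qed.

Lemma Nrm_facts n x : 0 <= Nrm n x /\ Nrm n x ^4 = znorm2 n x * Nrm n x ^2 + ht x ^2 /\
  nm n x <= Nrm n x /\ Rabs (ht x) <= Nrm n x ^2.
Proof. destruct (NN_facts (znorm2 n x) (ht x) (znorm2_nonneg n x)) as [H0 [H1 [H2 [H3 H4]]]].
  fold (Nrm n x) in *. repeat split; auto. apply nm_le_of_sq; auto. Qed.

Lemma Nrm_lip n g x : Nrm n (Hmul n g x) <= Nrm n x + 3 * Nrm n g.
Proof.
  destruct (Nrm_facts n x) as [Nx0 [NxE [Nxz Nxt]]].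
  destruct (Nrm_facts n g) as [Ng0 [NgE [Ngz Ngt]]].
  set (N := Nrm n x) in *. set (h := Nrm n g) in *.
  set (Zs := nm n x) in *. pose proof (nm_nonneg n x) as Zs0. fold Zs in Zs0.
  assert (HZ : znorm2 n (Hmul n g x) = znorm2 n (Vadd g x)) by reflexivity.
  assert (HZs : znorm2 n x = Zs^2) by (unfold Zs; rewrite nm_sq; auto).
  pose proof (nm_add_le n g x) as Hadd. fold Zs in Hadd.
  pose proof (nm_nonneg n (Vadd g x)).
  assert (HZ2 : znorm2 n (Hmul n g x) <= (h + Zs)^2) by (rewrite HZ, <- nm_sq; nra).
  assert (Hht : ht (Hmul n g x) = ht g + ht x + / 2 * imherm n g x) by reflexivity.
  pose proof (im_abs n g x) as Him. fold Zs in Him.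
  assert (0 <= nm n g) by apply nm_nonneg.
  assert (Him2 : Rabs (imherm n g x) <= h * Zs) by nra.
  set (T := Rabs (ht x)).
  assert (HT : Rabs (ht (Hmul n g x)) <= T + (h^2 + h*Zs/2)).
  { rewrite Hht. unfold T. pose proof (Rabs_triang (ht g + ht x) (/2 * imherm n g x)).
    pose proof (Rabs_triang (ht g) (ht x)). rewrite Rabs_mult in H1. rewrite (Rabs_right (/2)) in H1 by lra.
    lra. }
  assert (HT2 : T^2 = N^4 - Zs^2*N^2) by (unfold T; rewrite pow2_abs; rewrite <- HZs; lra).
  assert (0 <= T) by apply Rabs_pos.
  pose proof (core Zs T N h Zs0 Nxz Ng0 H1 Nxt HT2).
  apply NN_le.
  - apply znorm2_nonneg.
  - lra.
  - nra.
  - assert (ht (Hmul n g x) ^2 <= (T + (h^2 + h*Zs/2))^2).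
    { rewrite <- pow2_abs. pose proof (Rabs_pos (ht (Hmul n g x))). nra. }
    assert (0 <= (N + 3*h)^2) by apply pow2_ge_0.
    nra.
Qed.


Lemma Nrm_ext n x y : (forall j, (j < n)%nat -> hx x j ^2 + hy x j ^2 = hx y j ^2 + hy y j ^2) -> ht x ^2 = ht y ^2 -> Nrm n x = Nrm n y.
Proof. intros H Ht. unfold Nrm. apply NN_ext; auto. unfold znorm2. apply fsum_ext. auto. Qed.

Lemma Nrm_inv n x : Nrm n (Hinv x) = Nrm n x.
Proof. apply Nrm_ext. intros; simpl; ring. simpl; ring. Qed.

Lemma Nrm_cancel n a b : Nrm n (Hmul n (Hinv a) (Hmul n a b)) = Nrm n b.
Proof. apply Nrm_ext. intros; simpl; ring.
  assert (E : ht (Hmul n (Hinv a) (Hmul n a b)) = ht b).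
  { simpl. unfold imherm. simpl.
    assert (fsum (fun j => hx a j * hy b j - hy a j * hx b j) n + fsum (fun j => - hx a j * (hy a j + hy b j) - - hy a j * (hx a j + hx b j)) n = 0).
    { rewrite <- fsum_plus. rewrite <- (fsum_zero n). apply fsum_ext. intros; ring. }
    lra. }
  rewrite E; reflexivity. Qed.

Lemma Hdist_0r n p : Hdist n p H0 = Nrm n p.
Proof. rewrite Hdist_eq. apply Nrm_ext. intros; simpl; ring.
  simpl. unfold imherm; simpl. rewrite (fsum_ext _ (fun _ => 0)) by (intros; ring). rewrite fsum_zero. ring. Qed.

Lemma Hdist_0l n s : Hdist n H0 s = Nrm n s.
Proof. rewrite Hdist_eq. apply Nrm_ext. intros; simpl; ring.
  simpl. unfold imherm; simpl. rewrite (fsum_ext _ (fun _ => 0)) by (intros; ring). rewrite fsum_zero. ring. Qed.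

Lemma NN_0_sq r : 0 <= r -> NN 0 (r^2) = r.
Proof. intros Hr. unfold NN. replace (0^2/4 + (r^2)^2) with ((r^2)*(r^2)) by field.
  rewrite sqrt_square by nra. replace (0/2 + r^2) with (r*r) by field. apply sqrt_square; lra. Qed.

Lemma sphere_nonempty n r c : 0 <= r -> exists s, Hsphere n r c s.
Proof. intros Hr. exists (Hmul n (mkH (fun _ => 0) (fun _ => 0) (r^2)) c). unfold Hsphere. rewrite Hdist_eq.
  unfold Nrm. transitivity (NN 0 (r^2)); [|apply NN_0_sq; auto]. apply NN_ext.
  - unfold znorm2. simpl. transitivity (fsum (fun _ => 0) n); [apply fsum_ext; intros; ring| apply fsum_zero].
  - simpl. unfold imherm. simpl.
    rewrite (fsum_ext (fun j => 0 * hy c j - 0 * hx c j) (fun _ => 0)) by (intros; ring).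
    rewrite (fsum_ext (fun j => (0 + hx c j) * - hy c j - (0 + hy c j) * - hx c j) (fun _ => 0)) by (intros; ring).
    rewrite fsum_zero. ring.
Qed.

Lemma shell_pt n t r c y : r > 0 -> Hshell n t r c y -> forall d, d > 0 ->
  exists s, Nrm n (Hmul n s (Hinv c)) = r /\ Nrm n (Hmul n y (Hinv s)) < t + d.
Proof. intros Hr Hs d Hd. unfold Hshell, Hdist_set in Hs.
  set (A := fun a => exists s, Hsphere n r c s /\ a = Hdist n y s) in *.
  destruct (glb_exists A) as [m Hm].
  - destruct (sphere_nonempty n r c) as [s Hs']; [lra|]. exists (Hdist n y s). exists s; auto.
  - intros x [s [_ ->]]. rewrite Hdist_eq. apply Nrm_facts.
  - rewrite (Rinf_eq A m Hm) in Hs.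
    apply NNPP. intros Hno.
    assert (t + d <= m).
    { apply (proj2 Hm). intros x [s [Hsp ->]]. apply Rnot_lt_le. intros Hlt. apply Hno. exists s. split.
      - unfold Hsphere in Hsp. rewrite Hdist_eq in Hsp. auto.
      - rewrite <- Hdist_eq. auto. }
    lra.
Qed.


Lemma polar x y : exists th, - PI < th <= PI /\ x = sqrt (x^2 + y^2) * cos th /\ y = sqrt (x^2 + y^2) * sin th.
Proof.
  pose proof PI_RGT_0.
  set (r := sqrt (x^2 + y^2)).
  assert (Hr2 : r * r = x^2 + y^2) by (apply sqrt_sqrt; nra).
  assert (Hr0 : 0 <= r) by apply sqrt_pos.
  destruct (Req_dec r 0) as [R0|R0].
  - exists 0. assert (x = 0 /\ y = 0) as [-> ->] by (rewrite R0 in Hr2; nra). rewrite cos_0, sin_0. lra.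
  - assert (Hr : 0 < r) by lra.
    set (c := x / r).
    assert (Hc2 : c^2 <= 1). { unfold c. replace ((x/r)^2) with (x^2/(r*r)) by (field; lra). rewrite Hr2.
      apply Rmult_le_reg_r with (x^2+y^2); [nra|]. unfold Rdiv. rewrite Rmult_assoc, Rinv_l by nra. nra. }
    assert (Hcb : -1 <= c <= 1) by nra.
    assert (Hs : sqrt (1 - c^2) = Rabs y / r).
    { replace (1 - c^2) with ((Rabs y / r)^2).
      - apply sqrt_pow2. apply Rmult_le_pos; [apply Rabs_pos| left; apply Rinv_0_lt_compat; lra].
      - unfold c. replace ((Rabs y/r)^2) with (Rabs y ^2/(r*r)) by (field; lra). rewrite pow2_abs.
        replace ((x/r)^2) with (x^2/(r*r)) by (field; lra). rewrite Hr2. field. nra. }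
    pose proof (acos_bound c).
    assert (Hcos : cos (acos c) = c) by (apply cos_acos; auto).
    assert (Hsin : sin (acos c) = Rabs y / r) by (rewrite sin_acos by auto; rewrite <- Hs; unfold Rsqr; f_equal; ring).
    destruct (Rle_dec 0 y) as [Hy|Hy].
    + exists (acos c). split; [lra|]. rewrite Hcos, Hsin. rewrite Rabs_right by lra. unfold c. split; field; lra.
    + assert (-1 < c < 1).
      { assert (c^2 < 1); [|nra]. unfold c. replace ((x/r)^2) with (x^2/(r*r)) by (field; lra). rewrite Hr2.
        apply Rmult_lt_reg_r with (x^2+y^2); [nra|]. unfold Rdiv. rewrite Rmult_assoc, Rinv_l by nra. nra. }
      pose proof (acos_bound_lt c H1).
      exists (- acos c). split; [lra|]. rewrite cos_neg, sin_neg, Hcos, Hsin. rewrite Rabs_left by lra. unfold c. split; field; lra.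
Qed.

Lemma phi_spec n j p : hx (Hhat n p) j = rho n j p * cos (phi n j p) /\ hy (Hhat n p) j = rho n j p * sin (phi n j p).
Proof. unfold phi. set (P := fun th => - PI < th <= PI /\
     hx (Hhat n p) j = rho n j p * cos th /\ hy (Hhat n p) j = rho n j p * sin th).
  assert (H : P (epsilon (inhabits 0) P)). { apply epsilon_spec. apply polar. }
  destruct H as [_ H]. exact H. Qed.

Lemma phase n j p q : phi2 n j p q < PI / 6 ->
  let P := hx (Hhat n p) j * hx (Hhat n q) j + hy (Hhat n p) j * hy (Hhat n q) j in
  let Q := hx (Hhat n q) j * hy (Hhat n p) j - hy (Hhat n q) j * hx (Hhat n p) j in
  0 <= P /\ 3 * Q^2 <= P^2.
Proof. intros Hph P Q. unfold phi2 in Hph.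
  destruct (phi_spec n j p) as [Hxp Hyp]. destruct (phi_spec n j q) as [Hxq Hyq].
  set (d := phi n j p - phi n j q) in *.
  set (k := rho n j p * rho n j q).
  assert (k0 : 0 <= k) by (unfold k, rho; apply Rmult_le_pos; apply sqrt_pos).
  assert (HP : P = k * cos d) by (unfold P, k, d; rewrite Hxp, Hyp, Hxq, Hyq, cos_minus; ring).
  assert (HQ : Q = k * sin d) by (unfold Q, k, d; rewrite Hxp, Hyp, Hxq, Hyq, sin_minus; ring).
  pose proof PI_RGT_0.
  assert (Hc : sqrt 3 / 2 < cos d).
  { pose proof (acos_bound (cos d)). rewrite <- cos_PI6.
    rewrite <- (cos_acos (cos d)) by (split; [apply COS_bound| apply COS_bound]).
    apply cos_decreasing_1; lra. }
  assert (H3 : sqrt 3 * sqrt 3 = 3) by (apply sqrt_sqrt; lra).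
  assert (0 < sqrt 3) by (apply sqrt_lt_R0; lra).
  assert (Hsc : sin d ^2 + cos d ^2 = 1) by (pose proof (sin2_cos2 d); unfold Rsqr in *; lra).
  assert (3/4 < cos d ^2) by nra.
  rewrite HP, HQ. split; [nra|]. nra.
Qed.


Lemma cs2 a b c d : Rabs (a*c + b*d) <= sqrt (a^2+b^2) * sqrt (c^2+d^2).
Proof. apply sq_le_abs. apply Rmult_le_pos; apply sqrt_pos.
  rewrite Rpow_mult_distr. rewrite <- !Rsqr_pow2, !Rsqr_sqrt.
  - unfold Rsqr. pose proof (pow2_ge_0 (a*d - b*c)). nra.
  - unfold Rsqr; nra.
  - unfold Rsqr; nra. Qed.

Lemma small_comp zx zy vx vy al be e K V : 0 <= al -> 0 <= be -> e * e = 1 ->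
  sqrt (zx^2+zy^2) <= K -> sqrt (vx^2+vy^2) <= V ->
  - ((al + be) * K * V) <= al * (zx * vx + zy * vy) - be * e * (vx * zy - vy * zx).
Proof. intros Ha Hb He HK HV.
  pose proof (cs2 zx zy vx vy) as C1. pose proof (cs2 zx zy vy (-vx)) as C2.
  replace (zx * vy + zy * - vx) with (- (vx * zy - vy * zx)) in C2 by ring. rewrite Rabs_Ropp in C2.
  replace (vy^2 + (-vx)^2) with (vx^2+vy^2) in C2 by ring.
  set (Z := sqrt (zx^2+zy^2)) in *. set (W := sqrt (vx^2+vy^2)) in *.
  assert (0 <= Z) by apply sqrt_pos. assert (0 <= W) by apply sqrt_pos.
  assert (ZW : Z * W <= K * V) by (apply Rmult_le_compat; lra).
  assert (Hee : Rabs e = 1). { assert (e = 1 \/ e = -1) as [-> | ->] by nra; [apply Rabs_R1|]. rewrite Rabs_left; lra. }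
  assert (T1 : - (al * (Z*W)) <= al * (zx * vx + zy * vy)).
  { pose proof (Rle_abs (- (zx * vx + zy * vy))) as A1. rewrite Rabs_Ropp in A1.
    assert (al * Rabs (zx * vx + zy * vy) <= al * (Z * W)) by (apply Rmult_le_compat_l; lra). nra. }
  assert (T2 : be * e * (vx * zy - vy * zx) <= be * (Z * W)).
  { pose proof (Rle_abs (e * (vx * zy - vy * zx))) as A1. rewrite Rabs_mult, Hee in A1.
    assert (be * (e * (vx * zy - vy * zx)) <= be * (Z * W)) by (apply Rmult_le_compat_l; lra). nra. }
  nra.
Qed.

Lemma big_comp zx zy wx wy ex ey al be e E : 0 < al -> 0 <= be <= 51/100 * al -> e * e = 1 -> 0 <= E ->
  ex^2 + ey^2 <= E^2 ->
  0 <= zx * wx + zy * wy -> 3 * (wx * zy - wy * zx)^2 <= (zx * wx + zy * wy)^2 ->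
  (26/10 * E)^2 <= wx^2 + wy^2 ->
  0 <= al * (zx * (wx - ex) + zy * (wy - ey)) - be * e * ((wx - ex) * zy - (wy - ey) * zx).
Proof. intros Ha Hb He HE Hex HP HPQ HW.
  set (P := zx * wx + zy * wy) in *. set (Q := wx * zy - wy * zx) in *.
  set (Z := sqrt (zx^2+zy^2)). set (W := sqrt (wx^2+wy^2)).
  assert (Z0 : 0 <= Z) by apply sqrt_pos. assert (W0 : 0 <= W) by apply sqrt_pos.
  assert (Z2 : Z^2 = zx^2+zy^2) by (unfold Z; rewrite <- Rsqr_pow2, Rsqr_sqrt; nra).
  assert (W2 : W^2 = wx^2+wy^2) by (unfold W; rewrite <- Rsqr_pow2, Rsqr_sqrt; nra).
  assert (HWE : 26/10 * E <= W) by (apply Rsqr_incr_0_var; [unfold Rsqr; nra| lra]).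
  assert (HPQZ : P^2 + Q^2 = Z^2 * W^2) by (unfold P, Q; rewrite Z2, W2; ring).
  assert (HP2 : 17/10 * (Z * W) <= 2 * P).
  { apply Rsqr_incr_0_var; [|lra]. unfold Rsqr. assert (0 <= Z*W) by nra. nra. }
  assert (HQ2 : 2 * Rabs Q <= Z * W).
  { apply Rsqr_incr_0_var; [|nra]. unfold Rsqr. assert (Rabs Q ^2 = Q^2) by apply pow2_abs. nra. }
  pose proof (cs2 zx zy ex ey) as C1. pose proof (cs2 zx zy ey (-ex)) as C2.
  replace (zx * ey + zy * - ex) with (- (ex * zy - ey * zx)) in C2 by ring. rewrite Rabs_Ropp in C2.
  replace (ey^2 + (-ex)^2) with (ex^2+ey^2) in C2 by ring.
  set (F := sqrt (ex^2 + ey^2)) in *.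
  assert (F0 : 0 <= F) by apply sqrt_pos.
  assert (FE : F <= E) by (unfold F; rewrite <- (sqrt_pow2 E) by lra; apply sqrt_le_1_alt; lra).
  fold Z in C1, C2.
  assert (ZF : Z * F <= Z * E) by (apply Rmult_le_compat_l; lra).
  assert (Hee : Rabs e = 1). { assert (e = 1 \/ e = -1) as [-> | ->] by nra; [apply Rabs_R1|]. rewrite Rabs_left; lra. }
  replace (zx * (wx - ex) + zy * (wy - ey)) with (P - (zx * ex + zy * ey)) by (unfold P; ring).
  replace ((wx - ex) * zy - (wy - ey) * zx) with (Q - (ex * zy - ey * zx)) by (unfold Q; ring).
  set (D := zx * ex + zy * ey) in *. set (J := ex * zy - ey * zx) in *.
  assert (T1 : al * (P - Z * E) <= al * (P - D)).
  { apply Rmult_le_compat_l; [lra|]. pose proof (Rle_abs D). lra. }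
  assert (T2 : be * e * (Q - J) <= be * (Rabs Q + Z * E)).
  { rewrite Rmult_assoc. apply Rmult_le_compat_l; [lra|]. pose proof (Rle_abs (e * (Q - J))) as A1.
    rewrite Rabs_mult, Hee in A1. pose proof (Rabs_triang Q (-J)). rewrite Rabs_Ropp in H. unfold Rminus in A1. lra. }
  assert (T3 : be * (Rabs Q + Z * E) <= 51/100 * al * (Rabs Q + Z * E)).
  { apply Rmult_le_compat_r; [pose proof (Rabs_pos Q); pose proof (Rmult_le_pos Z E Z0 HE); lra|lra]. }
  assert (T4 : 0 <= al * (Z * W)) by (apply Rmult_le_pos; [lra| apply Rmult_le_pos; lra]).
  assert (T5 : al * (Z * E) <= al * (Z * W) * (10/26)).
  { assert (Z * E <= Z * W * (10/26)).
    { assert (Z * (26/10 * E) <= Z * W) by (apply Rmult_le_compat_l; lra). lra. }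
    assert (al * (Z * E) <= al * (Z * W * (10/26))) by (apply Rmult_le_compat_l; lra). lra. }
  assert (T6 : al * Rabs Q <= al * (Z * W) / 2).
  { assert (al * (2 * Rabs Q) <= al * (Z * W)) by (apply Rmult_le_compat_l; lra). lra. }
  assert (T7 : al * (Z * W) * (17/20) <= al * P).
  { assert (al * (17/10 * (Z * W)) <= al * (2 * P)) by (apply Rmult_le_compat_l; lra). lra. }
  assert (T8 : 51/100 * al * (Rabs Q + Z * E) = 51/100 * (al * Rabs Q) + 51/100 * (al * (Z * E))) by ring.
  assert (T9 : al * (P - Z * E) = al * P - al * (Z * E)) by ring.
  lra.
Qed.


Lemma mul_le x y X' Y' : 0 <= x -> x <= X' -> 0 <= y -> y <= Y' -> x * y <= X' * Y'.
Proof. intros. apply Rmult_le_compat; lra. Qed.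

Lemma base_facts (N t tt T R0 eps r rt a b h : R) (Ht : t >= 1) (Htt : tt >= 1) (HT : T >= t * tt) (HN : 0 <= N) (HR : R0 > 1000 * N + 1000)
  (Hrt : rt >= T * R0) (Hrte : rt <= eps * r) (He : 0 < eps < 1/1000) (Hh : h = 11/10 * t)
  (Ha1 : r - 3 * h <= a) (Ha2 : a <= r + 3 * h)
  (Hb1 : rt - 3 * (11/10 * tt) <= b) (Hb2 : b <= rt + 3 * (11/10 * tt)) :
  T >= t /\ T >= tt /\ T * 1000 <= rt /\ rt * 1000 <= r /\ 99/100 * rt <= b /\ b <= 101/100 * rt
  /\ h <= 12/10000 * b /\ 999/1000 * r <= a /\ a <= 1001/1000 * r /\ b <= 102/100000 * a /\ 0 < h /\ 0 < r.
Proof.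
  assert (T >= t) by (assert (t * 1 <= t * tt) by (apply Rmult_le_compat_l; lra); lra).
  assert (T >= tt) by (assert (1 * tt <= t * tt) by (apply Rmult_le_compat_r; lra); lra).
  assert (T * 1000 <= rt) by (assert (T * 1000 <= T * R0) by (apply Rmult_le_compat_l; lra); lra).
  assert (0 < r) by (assert (0 < eps * r) by lra; destruct (Rle_dec r 0); [nra|lra]).
  assert (rt * 1000 <= r) by (assert (eps * r <= 1/1000 * r) by (apply Rmult_le_compat_r; lra); lra).
  repeat split; lra.
Qed.

Lemma X_facts (N t tt T R0 eps r rt a b nq h : R) (Ht : t >= 1) (Htt : tt >= 1) (HT : T >= t * tt) (HN : 0 <= N) (HR : R0 > 1000 * N + 1000)
  (Hrt : rt >= T * R0) (Hrte : rt <= eps * r) (He : 0 < eps < 1/1000) (Hh : h = 11/10 * t)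
  (Ha1 : r - 3 * h <= a) (Ha2 : a <= r + 3 * h)
  (Hb1 : rt - 3 * (11/10 * tt) <= b) (Hb2 : b <= rt + 3 * (11/10 * tt)) (Hnq : 0 <= nq <= b / 4) (sa Is X L : R) (Hsa : 0 <= sa <= b^2 + h^2 + /2 * (nq * (nq + h)))
  (HL : L >= 96/100 * b^2 - 2 * h^2 - /2 * (nq * (nq + h)))
  (HIs : 0 <= Is <= (nq + h) * a + h * a)
  (HX1 : X >= 2 * (99/100 * a^2) - sa - h^2 - /2 * Is)
  (HX2 : X <= 2 * a^2 + sa + h^2 + /2 * Is) :
  19/10 * a^2 <= X <= 204/100 * r^2 /\ L >= 9/10 * b^2.
Proof.
  destruct (base_facts N t tt T R0 eps r rt a b h Ht Htt HT HN HR Hrt Hrte He Hh Ha1 Ha2 Hb1 Hb2) as [F1 [F2 [F3 [F4 [F5 [F6 [F7 [F8 [F9 [F10 [F11 F12]]]]]]]]]]].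
  assert (0 <= b) by lra.
  assert (Q1 : nq * (nq + h) <= b / 4 * (2512/10000 * b)) by (apply mul_le; lra).
  assert (Q2 : h * h <= (12/10000 * b) * (12/10000 * b)) by (apply mul_le; lra).
  assert (Q3 : b * b <= (102/100000 * a) * (102/100000 * a)) by (apply mul_le; lra).
  assert (Q4 : Is <= (2524/10000 * b) * a) by (assert ((nq + h) * a + h * a = (nq + 2 * h) * a) by ring; assert ((nq + 2*h) * a <= (2524/10000 * b) * a) by (apply Rmult_le_compat_r; lra); lra).
  assert (Q4' : b * a <= (102/100000 * a) * a) by (apply Rmult_le_compat_r; lra).
  assert (Q5 : a * a <= (1001/1000 * r) * (1001/1000 * r)) by (apply mul_le; lra).
  split; [split|]; lra.
Qed.
Lemma final_contra (N t tt T R0 eps r rt a b nq h : R) (Ht : t >= 1) (Htt : tt >= 1) (HT : T >= t * tt) (HN : 0 <= N) (HR : R0 > 1000 * N + 1000)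
  (Hrt : rt >= T * R0) (Hrte : rt <= eps * r) (He : 0 < eps < 1/1000) (Hh : h = 11/10 * t)
  (Ha1 : r - 3 * h <= a) (Ha2 : a <= r + 3 * h)
  (Hb1 : rt - 3 * (11/10 * tt) <= b) (Hb2 : b <= rt + 3 * (11/10 * tt)) (Hnq : 0 <= nq <= b / 4) (sa Is X L Br : R) (Hsa : 0 <= sa <= b^2 + h^2 + /2 * (nq * (nq + h)))
  (HL : L >= 96/100 * b^2 - 2 * h^2 - /2 * (nq * (nq + h)))
  (HIs : 0 <= Is <= (nq + h) * a + h * a)
  (HX1 : X >= 2 * (99/100 * a^2) - sa - h^2 - /2 * Is)
  (HX2 : X <= 2 * a^2 + sa + h^2 + /2 * Is)
  (HBr : Br >= N * (- ((2 * r^2 + X / 2) * (10 * T * a / r) * (nq + 2 * h))))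
  (Hid : X * L + Br <= r^2 * (nq + h)^2) :
  False.
Proof.
  destruct (base_facts N t tt T R0 eps r rt a b h Ht Htt HT HN HR Hrt Hrte He Hh Ha1 Ha2 Hb1 Hb2) as [F1 [F2 [F3 [F4 [F5 [F6 [F7 [F8 [F9 [F10 [F11 F12]]]]]]]]]]].
  destruct (X_facts N t tt T R0 eps r rt a b nq h Ht Htt HT HN HR Hrt Hrte He Hh Ha1 Ha2 Hb1 Hb2 Hnq sa Is X L Hsa HL HIs HX1 HX2) as [[X1 X2] L1].
  assert (0 <= b) by lra. assert (0 < a) by lra.
  pose proof (pow2_ge_0 a) as Pa2. pose proof (pow2_ge_0 b) as Pb2. pose proof (pow2_ge_0 r) as Pr2. assert (0 <= T) by lra.
  assert (Q1 : (19/10 * a^2) * (9/10 * b^2) <= X * L) by (apply mul_le; lra).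
  assert (Q2 : (r * r) * ((nq + h) * (nq + h)) <= ((10011/10000 * a) * (10011/10000 * a)) * ((2512/10000 * b) * (2512/10000 * b))).
  { apply mul_le; [apply Rmult_le_pos; lra| apply mul_le; lra| apply Rmult_le_pos; lra| apply mul_le; lra]. }
  assert (K1 : 10 * T * a / r <= 1001/100 * T).
  { apply Rmult_le_reg_r with r; [lra|]. unfold Rdiv. rewrite Rmult_assoc, Rinv_l, Rmult_1_r by lra.
    assert (T * a <= T * (1001/1000 * r)) by (apply Rmult_le_compat_l; lra). lra. }
  assert (K2 : 0 <= 10 * T * a / r) by (apply Rmult_le_pos; [apply Rmult_le_pos; lra| left; apply Rinv_0_lt_compat; lra]).
  assert (Q5 : r * r <= (10011/10000 * a) * (10011/10000 * a)) by (apply mul_le; lra).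
  assert (K3 : 2 * r^2 + X/2 <= 303/100 * a^2) by lra.
  assert (K4 : nq + 2 * h <= 26/100 * b) by lra.
  assert (K5 : (2 * r^2 + X / 2) * (10 * T * a / r) * (nq + 2 * h) <= 303/100 * a^2 * (1001/100 * T) * (26/100 * b)).
  { apply mul_le; [| |lra|lra]. apply Rmult_le_pos; lra. apply mul_le; lra. }
  assert (K6 : N * T <= 102/100000 * b).
  { assert (T * (1000 * N + 1000) <= T * R0) by (apply Rmult_le_compat_l; lra). lra. }
  assert (K7 : (N * T) * (a^2 * b) <= (102/100000 * b) * (a^2 * b)).
  { apply Rmult_le_compat_r; [apply Rmult_le_pos; lra|lra]. }
  assert (K8 : N * ((2 * r^2 + X / 2) * (10 * T * a / r) * (nq + 2 * h)) <= N * (303/100 * a^2 * (1001/100 * T) * (26/100 * b))).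
  { apply Rmult_le_compat_l; lra. }
  assert (0 < b) by lra.
  assert (0 < a^2 * b^2) by (apply Rmult_lt_0_compat; apply pow_lt; lra).
  lra.
Qed.


Lemma Nrm_pos n p : Hnonzero n p -> 0 < Nrm n p.
Proof. intros Hp. destruct (Nrm_facts n p) as [H0 _]. destruct H0 as [H0|H0]; auto. exfalso.
  unfold Nrm in H0. symmetry in H0. apply NN_zero in H0; [|apply znorm2_nonneg]. destruct H0 as [HZ Ht].
  destruct Hp as [Hp|[j [Hj Hp]]]; [auto|].
  pose proof (fsum_zero_inv (fun j => hx p j ^2 + hy p j ^2) n) as Z. unfold znorm2 in HZ.
  assert (hx p j ^2 + hy p j ^2 = 0) by (apply Z; auto; intros i _; pose proof (pow2_ge_0 (hx p i)); pose proof (pow2_ge_0 (hy p i)); lra).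
  pose proof (pow2_ge_0 (hx p j)); pose proof (pow2_ge_0 (hy p j)).
  destruct Hp as [Hp|Hp]; apply Hp; nra.
Qed.

Lemma abs_e e y : e * e = 1 -> Rabs (e * y) = Rabs y.
Proof. intros He. rewrite Rabs_mult. assert (Rabs e = 1); [|rewrite H; ring].
  assert (e = 1 \/ e = -1) as [-> | ->] by nra; [apply Rabs_R1|]. rewrite Rabs_left; lra. Qed.

Lemma sqrt_scale a x y : 0 < a -> sqrt ((/a * x)^2 + (/a * y)^2) = /a * sqrt (x^2 + y^2).
Proof. intros Ha. replace ((/a * x)^2 + (/a * y)^2) with ((/a)^2 * (x^2 + y^2)) by ring.
  rewrite sqrt_mult. rewrite sqrt_pow2. reflexivity. left; apply Rinv_0_lt_compat; auto.
  apply pow2_ge_0. nra. Qed.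

Lemma mink2 a b c d : (a + c)^2 + (b + d)^2 <= (sqrt (a^2+b^2) + sqrt (c^2+d^2))^2.
Proof. pose proof (cs2 a b c d). pose proof (Rle_abs (a*c+b*d)).
  assert (sqrt (a^2+b^2)^2 = a^2+b^2) by (rewrite <- Rsqr_pow2, Rsqr_sqrt; nra).
  assert (sqrt (c^2+d^2)^2 = c^2+d^2) by (rewrite <- Rsqr_pow2, Rsqr_sqrt; nra).
  nra. Qed.

Lemma imherm_inv_r n x y : imherm n x (Hinv y) = - imherm n x y.
Proof. unfold imherm; simpl. transitivity (-1 * fsum (fun j => hx x j * hy y j - hy x j * hx y j) n); [|ring].
  rewrite <- fsum_scal. apply fsum_ext. intros; ring. Qed.


Theorem lemma13 (n : nat) (Hn : (1 <= n)%nat) :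
  exists taub rhob Rb phib epsb : R,
    / 2 < taub < 1 /\ rhob > 0 /\ Rb > 0 /\ phib > 0 /\ epsb > 0 /\
    forall (p q : Hpt) (t tt R0 T eps r rt : R),
      Hnonzero n p -> Hnonzero n q ->
      t >= 1 -> tt >= 1 -> R0 > 1 -> T >= t * tt ->
      0 < eps < 1 ->
      r >= rt -> rt >= T * R0 -> rt <= eps * r ->
      Hshell n t r p q ->
      Hshell n t r p H0 -> Hshell n tt rt q H0 ->
      R0 > Rb -> eps < epsb ->
      Rabs (ht (Hhat n p)) >= taub ->
      (forall i, (i < n)%nat -> phi2 n i p q < phib) ->
      (exists i, (i < n)%nat /\ ~ (rho n i p < 10 * T / r) /\
                 rho n i q < 10 * T / rt)
      \/ Hdist n (Hhat n p) (Hhat n q) > rhob.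
Proof.
  pose proof (pos_INR n) as HN.
  pose proof PI_RGT_0 as HPI.
  exists (99/100), (1/10), (1000 * INR n + 1000), (PI / 6), (1/1000).
  split; [split; lra|]. split; [lra|]. split; [lra|]. split; [lra|]. split; [lra|].
  intros p q t tt R0 T eps r rt Hp Hq Ht Htt HR HT Heps Hr Hrt Hrte Hsq Hsp0 Hsq0 HRb Heb Htau Hphi.
  destruct (classic (exists i, (i < n)%nat /\ ~ (rho n i p < 10 * T / r) /\ rho n i q < 10 * T / rt)) as [Hex|Hno];
    [left; exact Hex| right].
  apply Rnot_le_gt. intro Hclose.
  assert (HT1 : T >= 1) by (assert (1 * 1 <= t * tt) by (apply Rmult_le_compat; lra); lra).
  assert (Hrt0 : rt > 0) by (assert (1 * R0 <= T * R0) by (apply Rmult_le_compat_r; lra); lra).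
  assert (Hr0 : r > 0) by lra.
  set (a := Nrm n p). set (b := Nrm n q).
  assert (Ha0 : 0 < a) by (apply Nrm_pos; auto).
  assert (Hb0 : 0 < b) by (apply Nrm_pos; auto).
  set (h := 11/10 * t).
  destruct (shell_pt n t r p H0 Hr0 Hsp0 (t/10)) as [s0 [Hs0a Hs0b]]; [lra|].
  rewrite <- Hdist_eq, Hdist_0l in Hs0b.
  destruct (shell_pt n t r p q Hr0 Hsq (t/10)) as [s [Hsa Hsb]]; [lra|].
  destruct (shell_pt n tt rt q H0 Hrt0 Hsq0 (tt/10)) as [s1 [Hs1a Hs1b]]; [lra|].
  rewrite <- Hdist_eq, Hdist_0l in Hs1b.
  assert (La1 : r <= a + 3 * Nrm n s0).
  { rewrite <- Hs0a. unfold a. rewrite <- (Nrm_inv n p). apply Nrm_lip. }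
  assert (La2 : a <= r + 3 * Nrm n s0).
  { unfold a. rewrite <- (Nrm_inv n p). rewrite <- (Nrm_cancel n s0 (Hinv p)). rewrite <- (Nrm_inv n s0). rewrite <- Hs0a. apply Nrm_lip. }
  assert (Lb1 : rt <= b + 3 * Nrm n s1).
  { rewrite <- Hs1a. unfold b. rewrite <- (Nrm_inv n q). apply Nrm_lip. }
  assert (Lb2 : b <= rt + 3 * Nrm n s1).
  { unfold b. rewrite <- (Nrm_inv n q). rewrite <- (Nrm_cancel n s1 (Hinv q)). rewrite <- (Nrm_inv n s1). rewrite <- Hs1a. apply Nrm_lip. }
  assert (Ha1 : r - 3 * h <= a) by (unfold h; lra).
  assert (Ha2 : a <= r + 3 * h) by (unfold h; lra).
  assert (Hb1 : rt - 3 * (11/10 * tt) <= b) by lra.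
  assert (Hb2 : b <= rt + 3 * (11/10 * tt)) by lra.
  assert (Hhp : Hhat n p = Hdil (/ a) p) by (unfold Hhat; rewrite Hdist_0r; reflexivity).
  assert (Hhq : Hhat n q = Hdil (/ b) q) by (unfold Hhat; rewrite Hdist_0r; reflexivity).
  set (hp := Hhat n p) in *. set (hq := Hhat n q) in *.
  destruct (Nrm_facts n p) as [_ [PE [Pz Pt]]]. fold a in PE, Pz, Pt.
  destruct (Nrm_facts n q) as [_ [QE [Qz Qt]]]. fold b in QE, Qz, Qt.
  set (tau := ht p) in *. set (sig := ht q) in *.
  assert (Hzhp : znorm2 n hp = (/a)^2 * znorm2 n p) by (rewrite Hhp; apply znorm2_dil).
  assert (Hzhq : znorm2 n hq = (/b)^2 * znorm2 n q) by (rewrite Hhq; apply znorm2_dil).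
  assert (Hthp : ht hp = (/a)^2 * tau) by (rewrite Hhp; reflexivity).
  assert (Hthq : ht hq = (/b)^2 * sig) by (rewrite Hhq; reflexivity).
  assert (Nhp : znorm2 n hp + ht hp ^2 = 1).
  { rewrite Hzhp, Hthp. apply Rmult_eq_reg_l with (a^4); [|apply pow_nonzero; lra].
    rewrite Rmult_1_r. transitivity (znorm2 n p * a^2 + tau^2); [field; lra| lra]. }
  rewrite Hdist_eq in Hclose. set (x := Hmul n hp (Hinv hq)) in *.
  destruct (Nrm_facts n x) as [_ [_ [Xz Xt]]].
  assert (Hnhq : nm n hq <= nm n hp + nm n x).
  { rewrite (nm_ext n hq (Vsub hp x)). apply nm_sub_le. intros j _. unfold x. simpl. split; ring. }
  assert (Hnhp : nm n hp <= 1411/10000).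
  { apply nm_le_of_sq; [lra|]. assert (ht hp ^2 >= (99/100)^2).
    { rewrite <- pow2_abs. apply Rle_ge. apply pow_incr. lra. }
    lra. }
  assert (Hnhq' : nm n hq <= 2411/10000) by lra.
  assert (Hzq' : znorm2 n hq <= 6/100).
  { rewrite <- nm_sq. pose proof (nm_nonneg n hq). nra. }
  assert (Hxt : ht x = ht hp - ht hq - / 2 * imherm n hp hq).
  { unfold x. simpl. rewrite imherm_inv_r. ring. }
  assert (Himh : Rabs (imherm n hp hq) <= 35/1000).
  { pose proof (im_abs n hp hq). pose proof (nm_nonneg n hp). pose proof (nm_nonneg n hq).
    assert (nm n hp * nm n hq <= 1411/10000 * (2411/10000)) by (apply Rmult_le_compat; lra). lra. }
  assert (Hts : Rabs (ht hp - ht hq) <= 3/100).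
  { assert (EE : ht hp - ht hq = ht x + /2 * imherm n hp hq) by (rewrite Hxt; ring). rewrite EE.
    pose proof (Rabs_triang (ht x) (/2 * imherm n hp hq)) as TT. rewrite Rabs_mult, (Rabs_right (/2)) in TT by lra.
    assert (Nrm n x ^2 <= (1/10)^2) by (apply pow_incr; split; [apply Nrm_facts|lra]). lra. }
  set (e := if Rle_dec 0 (ht hp) then 1 else -1).
  assert (He : e * e = 1) by (unfold e; destruct (Rle_dec 0 (ht hp)); lra).
  assert (Het : e * ht hp >= 99/100).
  { unfold e; destruct (Rle_dec 0 (ht hp)). rewrite Rabs_right in Htau; lra. rewrite Rabs_left in Htau; lra. }
  assert (Hes : e * ht hq >= 96/100).
  { assert (e * ht hq = e * ht hp - e * (ht hp - ht hq)) by ring.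
    pose proof (Rle_abs (e * (ht hp - ht hq))) as TT. rewrite abs_e in TT by auto. lra. }
  assert (HZq : znorm2 n q = b^2 * znorm2 n hq) by (rewrite Hzhq; field; lra).
  assert (Hsig : sig = b^2 * ht hq) by (rewrite Hthq; field; lra).
  assert (Htau' : tau = a^2 * ht hp) by (rewrite Hthp; field; lra).
  set (nq := nm n q).
  assert (Hnq : 0 <= nq <= b / 4).
  { split; [apply nm_nonneg|]. apply nm_le_of_sq; [lra|]. rewrite HZq. pose proof (pow2_ge_0 b). nra. }
  assert (Hesig : e * sig >= 96/100 * b^2) by (rewrite Hsig; pose proof (pow2_ge_0 b); nra).
  assert (Hetau : e * tau >= 99/100 * a^2) by (rewrite Htau'; pose proof (pow2_ge_0 a); nra).
  pose proof (Rle_abs (e * tau)) as Hetau2. rewrite abs_e in Hetau2 by auto.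
  set (g := Hmul n q (Hinv s)) in *.
  destruct (Nrm_facts n g) as [G0 [_ [Gz Gt]]].
  destruct (Nrm_facts n s0) as [S0 [_ [S0z S0t]]].
  assert (Hgh : Nrm n g <= h) by (unfold h; lra).
  assert (Hs0h : Nrm n s0 <= h) by (unfold h; lra).
  assert (Gt' : Rabs (ht g) <= h^2) by (assert (Nrm n g ^2 <= h^2) by (apply pow_incr; lra); lra).
  assert (S0t' : Rabs (ht s0) <= h^2) by (assert (Nrm n s0 ^2 <= h^2) by (apply pow_incr; lra); lra).
  assert (Hns : nm n s <= nq + h).
  { rewrite (nm_ext n s (Vsub q g)). pose proof (nm_sub_le n q g). fold nq in H. lra.
    intros j _. unfold g. simpl. split; ring. }
  set (v := Vsub s s0).
  assert (Hnv : nm n v <= nq + 2 * h) by (pose proof (nm_sub_le n s s0); unfold v; lra).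
  pose proof (nm_nonneg n s) as Ns0. pose proof (nm_nonneg n p) as Np0. pose proof (nm_nonneg n s0) as Ns00.
  set (Is := imherm n s p). set (Is0 := imherm n s0 p).
  assert (HIs : Rabs Is <= (nq + h) * a).
  { pose proof (im_abs n s p). fold Is in H. assert (nm n s * nm n p <= (nq + h) * a) by (apply Rmult_le_compat; lra). lra. }
  assert (HIs0 : Rabs Is0 <= h * a).
  { pose proof (im_abs n s0 p). fold Is0 in H. assert (nm n s0 * nm n p <= h * a) by (apply Rmult_le_compat; lra). lra. }
  assert (HIqs : Rabs (imherm n q s) <= nq * (nq + h)).
  { pose proof (im_abs n q s). fold nq in H. assert (nq * nm n s <= nq * (nq + h)) by (apply Rmult_le_compat_l; lra). lra. }
  assert (Hgt : ht g = sig - ht s - / 2 * imherm n q s) by (unfold g; simpl; rewrite imherm_inv_r; unfold sig; ring).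
  destruct (Nrm_facts n (Hmul n s (Hinv p))) as [_ [E1 _]]. rewrite Hsa in E1.
  destruct (Nrm_facts n (Hmul n s0 (Hinv p))) as [_ [E2 _]]. rewrite Hs0a in E2.
  assert (Z1 : znorm2 n (Hmul n s (Hinv p)) = znorm2 n s - 2 * dot n s p + znorm2 n p).
  { rewrite <- znorm2_sub. unfold znorm2. apply fsum_ext. intros; simpl; ring. }
  assert (Z2 : znorm2 n (Hmul n s0 (Hinv p)) = znorm2 n s0 - 2 * dot n s0 p + znorm2 n p).
  { rewrite <- znorm2_sub. unfold znorm2. apply fsum_ext. intros; simpl; ring. }
  assert (T1 : ht (Hmul n s (Hinv p)) = ht s - tau - / 2 * Is) by (simpl; rewrite imherm_inv_r; unfold Is, tau; ring).
  assert (T2 : ht (Hmul n s0 (Hinv p)) = ht s0 - tau - / 2 * Is0) by (simpl; rewrite imherm_inv_r; unfold Is0, tau; ring).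
  rewrite Z1, T1 in E1. rewrite Z2, T2 in E2.
  set (X := e * (2 * tau - ht s - ht s0 + / 2 * (Is + Is0))).
  set (L := e * (ht s - ht s0)).
  set (Br := 2 * r^2 * (dot n s p - dot n s0 p) - X / 2 * e * (Is - Is0)).
  assert (Hid0 : X * L + Br = r^2 * (znorm2 n s - znorm2 n s0)).
  { assert (Key : X * L + Br = (e * e) * ((ht s0 - tau - / 2 * Is0)^2 - (ht s - tau - / 2 * Is)^2) + 2 * r^2 * (dot n s p - dot n s0 p))
      by (unfold Br, X, L; field).
    rewrite He in Key. lra. }
  set (sa := Rabs (ht s)).
  assert (Hhts : ht s = sig - ht g - / 2 * imherm n q s) by (rewrite Hgt; ring).
  assert (Hsa' : 0 <= sa <= b^2 + h^2 + / 2 * (nq * (nq + h))).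
  { split; [apply Rabs_pos|]. unfold sa. rewrite Hhts.
    pose proof (Rabs_triang (sig - ht g) (- (/2 * imherm n q s))) as A1. pose proof (Rabs_triang sig (- ht g)) as A2.
    rewrite Rabs_Ropp in A1, A2. rewrite Rabs_mult, (Rabs_right (/2)) in A1 by lra. unfold Rminus. unfold Rminus in A1. lra. }
  assert (HL : L >= 96/100 * b^2 - 2 * h^2 - / 2 * (nq * (nq + h))).
  { assert (L = e * sig - e * ht g - / 2 * (e * imherm n q s) - e * ht s0) by (unfold L; rewrite Hhts; ring).
    pose proof (Rle_abs (e * ht g)). pose proof (Rle_abs (e * imherm n q s)). pose proof (Rle_abs (e * ht s0)).
    rewrite abs_e in * by auto. lra. }
  set (Isum := Rabs Is + Rabs Is0).
  assert (HIsum : 0 <= Isum <= (nq + h) * a + h * a) by (unfold Isum; pose proof (Rabs_pos Is); pose proof (Rabs_pos Is0); lra).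
  assert (HX1 : X >= 2 * (99/100 * a^2) - sa - h^2 - / 2 * Isum).
  { assert (X = 2 * (e * tau) - e * ht s - e * ht s0 + / 2 * (e * Is + e * Is0)) by (unfold X; ring).
    pose proof (Rle_abs (e * ht s)). pose proof (Rle_abs (e * ht s0)). pose proof (Rle_abs (- (e * Is))). pose proof (Rle_abs (- (e * Is0))).
    rewrite Rabs_Ropp in *. rewrite abs_e in * by auto. unfold sa, Isum. lra. }
  assert (HX2 : X <= 2 * a^2 + sa + h^2 + / 2 * Isum).
  { assert (X = 2 * (e * tau) - e * ht s - e * ht s0 + / 2 * (e * Is + e * Is0)) by (unfold X; ring).
    pose proof (Rle_abs (- (e * ht s))). pose proof (Rle_abs (- (e * ht s0))). pose proof (Rle_abs (e * Is)). pose proof (Rle_abs (e * Is0)).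
    rewrite Rabs_Ropp in *. rewrite abs_e in * by auto. unfold sa, Isum. lra. }
  assert (Hhdef : h = 11/10 * t) by reflexivity.
  assert (HRb' : R0 > 1000 * INR n + 1000) by lra.
  assert (Heps' : 0 < eps < 1/1000) by lra.
  destruct (base_facts (INR n) t tt T R0 eps r rt a b h Ht Htt HT HN HRb' Hrt Hrte Heps' Hhdef Ha1 Ha2 Hb1 Hb2)
    as [F1 [F2 [F3 [F4 [F5 [F6 [F7 [F8 [F9 [F10 [F11 F12]]]]]]]]]]].
  destruct (X_facts (INR n) t tt T R0 eps r rt a b nq h Ht Htt HT HN HRb' Hrt Hrte Heps' Hhdef Ha1 Ha2 Hb1 Hb2 Hnq
     sa Isum X L Hsa' HL HIsum HX1 HX2) as [[X1 X2] L1].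
  assert (HK0 : 0 <= 10 * T * a / r) by (apply Rmult_le_pos; [apply Rmult_le_pos; lra| left; apply Rinv_0_lt_compat; lra]).
  assert (Hc0 : 0 <= (2 * r^2 + X / 2) * (10 * T * a / r) * (nq + 2 * h)).
  { apply Rmult_le_pos; [apply Rmult_le_pos; [pose proof (pow2_ge_0 r); lra| lra]| lra]. }
  assert (HBr : Br >= INR n * (- ((2 * r^2 + X / 2) * (10 * T * a / r) * (nq + 2 * h)))).
  { assert (Bsum : Br = fsum (fun j => 2 * r^2 * (hx p j * hx v j + hy p j * hy v j) - X / 2 * e * (hx v j * hy p j - hy v j * hx p j)) n).
    { rewrite fsum_minus, fsum_scal, fsum_scal. unfold Br. f_equal; f_equal.
      - unfold dot. rewrite <- fsum_minus. apply fsum_ext; intros; unfold v; simpl; ring.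
      - unfold Is, Is0, imherm. rewrite <- fsum_minus. apply fsum_ext; intros; unfold v; simpl; ring. }
    rewrite Bsum. apply Rle_ge. apply fsum_lb. intros j Hj.
    destruct (Rlt_dec (rho n j p) (10 * T / r)) as [Hsm|Hbg].
    - apply small_comp.
      + pose proof (pow2_ge_0 r); lra.
      + lra.
      + auto.
      + assert (Erho : rho n j p = / a * sqrt (hx p j ^2 + hy p j ^2)).
        { unfold rho. fold hp. rewrite Hhp. simpl. apply sqrt_scale; auto. }
        rewrite Erho in Hsm.
        assert (sqrt (hx p j ^2 + hy p j ^2) = a * (/ a * sqrt (hx p j ^2 + hy p j ^2))) by (field; lra).
        rewrite H. assert (a * (/ a * sqrt (hx p j ^ 2 + hy p j ^ 2)) <= a * (10 * T / r)) by (apply Rmult_le_compat_l; lra).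
        unfold Rdiv in *. lra.
      + pose proof (comp_le n v j Hj). lra.
    - assert (Hrq : rho n j q >= 10 * T / rt).
      { apply Rnot_lt_ge. intro Hlt. apply Hno. exists j. auto. }
      assert (Ep : forall k, hx p k = a * hx hp k /\ hy p k = a * hy hp k).
      { intro k. rewrite Hhp. simpl. split; field; lra. }
      assert (Eq : forall k, hx q k = b * hx hq k /\ hy q k = b * hy hq k).
      { intro k. rewrite Hhq. simpl. split; field; lra. }
      destruct (phase n j p q (Hphi j Hj)) as [Ph1 Ph2]. fold hp hq in Ph1, Ph2.
      assert (HP : 0 <= hx p j * hx q j + hy p j * hy q j /\
                   3 * (hx q j * hy p j - hy q j * hx p j)^2 <= (hx p j * hx q j + hy p j * hy q j)^2).
      { destruct (Ep j) as [-> ->]. destruct (Eq j) as [-> ->].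
        assert (0 < a * b) by (apply Rmult_lt_0_compat; lra).
        replace (a * hx hp j * (b * hx hq j) + a * hy hp j * (b * hy hq j)) with
          ((a * b) * (hx hp j * hx hq j + hy hp j * hy hq j)) by ring.
        replace (b * hx hq j * (a * hy hp j) - b * hy hq j * (a * hx hp j)) with
          ((a * b) * (hx hq j * hy hp j - hy hq j * hx hp j)) by ring.
        split; [apply Rmult_le_pos; lra|].
        rewrite !Rpow_mult_distr. assert ((a*b)^2 * (3 * (hx hq j * hy hp j - hy hq j * hx hp j) ^ 2) <= (a*b)^2 * ((hx hp j * hx hq j + hy hp j * hy hq j) ^ 2)) by (apply Rmult_le_compat_l; [apply pow2_ge_0| lra]). lra. }
      assert (HW : (26/10 * (2 * h))^2 <= hx q j ^2 + hy q j ^2).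
      { assert (Erho : rho n j q = / b * sqrt (hx q j ^2 + hy q j ^2)).
        { unfold rho. fold hq. rewrite Hhq. simpl. apply sqrt_scale; auto. }
        assert (Es : sqrt (hx q j ^2 + hy q j ^2) = b * rho n j q) by (rewrite Erho; field; lra).
        assert (b * (10 * T / rt) <= b * rho n j q) by (apply Rmult_le_compat_l; lra).
        assert (b * (10 * T / rt) >= 99/100 * (10 * T)).
        { unfold Rdiv. replace (b * (10 * T * / rt)) with ((b / rt) * (10 * T)) by (field; lra).
          assert (99/100 <= b / rt) by (apply Rmult_le_reg_r with rt; [lra|]; replace (b / rt * rt) with b by (field; lra); lra).
          apply Rle_ge. apply Rmult_le_compat_r; lra. }
        assert (26/10 * (2 * h) <= sqrt (hx q j ^2 + hy q j ^2)) by (unfold h in *; lra).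
        assert (sqrt (hx q j ^2 + hy q j ^2) ^2 = hx q j ^2 + hy q j ^2) by (rewrite <- Rsqr_pow2, Rsqr_sqrt; [reflexivity| pose proof (pow2_ge_0 (hx q j)); pose proof (pow2_ge_0 (hy q j)); lra]).
        rewrite <- H2. apply pow_incr. unfold h; lra. }
      assert (HE : (hx q j - hx s j + hx s0 j)^2 + (hy q j - hy s j + hy s0 j)^2 <= (2 * h)^2).
      { pose proof (mink2 (hx g j) (hy g j) (hx s0 j) (hy s0 j)) as M.
        pose proof (comp_le n g j Hj). pose proof (comp_le n s0 j Hj).
        pose proof (sqrt_pos (hx g j ^2 + hy g j ^2)). pose proof (sqrt_pos (hx s0 j ^2 + hy s0 j ^2)).
        assert ((sqrt (hx g j ^2 + hy g j ^2) + sqrt (hx s0 j ^2 + hy s0 j ^2))^2 <= (2 * h)^2) by (apply pow_incr; lra).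
        unfold g in M; simpl in M. replace (hx q j - hx s j + hx s0 j) with (hx q j + - hx s j + hx s0 j) by ring.
        replace (hy q j - hy s j + hy s0 j) with (hy q j + - hy s j + hy s0 j) by ring.
        unfold g in H3. simpl in H3. lra. }
      pose proof (big_comp (hx p j) (hy p j) (hx q j) (hy q j) (hx q j - hx s j + hx s0 j) (hy q j - hy s j + hy s0 j)
        (2 * r^2) (X / 2) e (2 * h) ltac:(pose proof (pow_lt r 2 ltac:(lra)); lra) ltac:(lra) He ltac:(lra) HE (proj1 HP) (proj2 HP) HW) as BC.
      assert (EE : 2 * r ^ 2 * (hx p j * hx v j + hy p j * hy v j) - X / 2 * e * (hx v j * hy p j - hy v j * hx p j) =
        2 * r ^ 2 * (hx p j * (hx q j - (hx q j - hx s j + hx s0 j)) + hy p j * (hy q j - (hy q j - hy s j + hy s0 j))) -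
        X / 2 * e * ((hx q j - (hx q j - hx s j + hx s0 j)) * hy p j - (hy q j - (hy q j - hy s j + hy s0 j)) * hx p j)).
      { unfold v; simpl; ring. }
      rewrite EE. lra. }
  assert (HZs : znorm2 n s <= (nq + h)^2) by (rewrite <- nm_sq; apply pow_incr; lra).
  pose proof (znorm2_nonneg n s0).
  assert (Hid : X * L + Br <= r^2 * (nq + h)^2).
  { rewrite Hid0. apply Rmult_le_compat_l; [apply pow2_ge_0| lra]. }
  exact (final_contra (INR n) t tt T R0 eps r rt a b nq h Ht Htt HT HN HRb' Hrt Hrte Heps' Hhdef Ha1 Ha2 Hb1 Hb2 Hnq
     sa Isum X L Br Hsa' HL HIsum HX1 HX2 HBr Hid).
Qed.
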